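(* Let $L\ge 2$ and let $M_1,\dots,M_L$ be pairwise distinct positive integers. Let $N$ be an integer with $0\le N<\operatorname{lcm}(M_1,\dots,M_L)$, and for $1\le i\le L$ let $r_i\in\{0,\dots,M_i-1\}$ be the remainder of $N$ modulo $M_i$ and $n_i=(N-r_i)/M_i$. Let $\tilde r_1,\dots,\tilde r_L$ be integers with $0\le\tilde r_i\le M_i-1$ and $|\tilde r_i-r_i|\le\tau$ for all $i$, where $$\tau<\max_{1\le i\le L}\ \min_{1\le j\le L,\ j\ne i}\frac{\gcd(M_i,M_j)}{4}.$$ Let $k$ be an index attaining this maximum, i.e. $\min_{j\ne k}\gcd(M_k,M_j)=\max_i\min_{j\ne i}\gcd(M_i,M_j)$. Then the single-stage algorithm (described in the context) run on the moduli $M_1,\dots,M_L$ with reference index $k$ and inputs $\tilde r_1,\dots,\tilde r_L$ outputs $\hat n_i=n_i$ for all $1\le i\le L$.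
   Context: For $x\in\mathbb R$, $[x]$ denotes the unique integer with $-1/2\le x-[x]<1/2$. Single-stage algorithm: let $P_1,\dots,P_m$ ($m\ge2$) be pairwise distinct positive integers, $k\in\{1,\dots,m\}$ a reference index, and $x_1,\dots,x_m$ integers. For each $i\ne k$ put $m_{ki}=\gcd(P_k,P_i)$, $\Gamma_{ki}=P_k/m_{ki}$, $\Gamma_{ik}=P_i/m_{ki}$, $\hat q_{ik}=[(x_i-x_k)/m_{ki}]$; let $\bar\Gamma_{ki}$ be a multiplicative inverse of $\Gamma_{ki}$ modulo $\Gamma_{ik}$, and let $\hat\xi_{ik}\in\{0,\dots,\Gamma_{ik}-1\}$ with $\hat\xi_{ik}\equiv\hat q_{ik}\bar\Gamma_{ki}\pmod{\Gamma_{ik}}$. Let $\hat n_k$ be the least nonnegative integer $y$ with $y\equiv\hat\xi_{ik}\pmod{\Gamma_{ik}}$ for all $i\ne k$ (if no such $y$ exists the algorithm fails). For $i\ne k$ set $\hat n_i=(\hat n_k\Gamma_{ki}-\hat q_{ik})/\Gamma_{ik}$. Outputs: $\hat n_1,\dots,\hat n_m$ and the estimate $[\frac1m\sum_{i=1}^m(\hat n_iP_i+x_i)]$. *)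

(* Defs.v *)
(* integers Z, reals R. Indices are 0-based: 0 .. m-1. *)
From Stdlib Require Import ZArith Reals List.
Import ListNotations.

(* [x]: the unique integer with -1/2 <= x - [x] < 1/2, i.e. floor(x + 1/2).
   Stdlib's [up y] is the unique integer with y < up y <= y + 1,
   so floor y = up y - 1. *)
Definition round (x : R) : Z := (up (x + / 2) - 1)%Z.

Open Scope Z_scope.

(* Quantities of the single-stage algorithm, moduli P, inputs x, reference k *)
Definition mki (P : nat -> Z) (k i : nat) : Z := Z.gcd (P k) (P i).
Definition Gki (P : nat -> Z) (k i : nat) : Z := P k / mki P k i.
Definition Gik (P : nat -> Z) (k i : nat) : Z := P i / mki P k i.
Definition qhat (P x : nat -> Z) (k i : nat) : Z :=
  round (IZR (x i - x k) / IZR (mki P k i))%R.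

Definition is_inverse_family (P : nat -> Z) (m k : nat) (Gbar : nat -> Z) : Prop :=
  forall i, (i < m)%nat -> i <> k ->
    (Gki P k i * Gbar i) mod Gik P k i = 1 mod Gik P k i.

Definition xihat (P x : nat -> Z) (k : nat) (Gbar : nat -> Z) (i : nat) : Z :=
  (qhat P x k i * Gbar i) mod Gik P k i.

Definition crt_sol (P x : nat -> Z) (m k : nat) (Gbar : nat -> Z) (y : Z) : Prop :=
  0 <= y /\ forall i, (i < m)%nat -> i <> k ->
    y mod Gik P k i = xihat P x k Gbar i mod Gik P k i.

(* y is the least such solution, i.e. y = n_hat_k *)
Definition is_nk_hat (P x : nat -> Z) (m k : nat) (Gbar : nat -> Z) (y : Z) : Prop :=
  crt_sol P x m k Gbar y /\ forall y', crt_sol P x m k Gbar y' -> y <= y'.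

Definition nhat (P x : nat -> Z) (k : nat) (y : Z) (i : nat) : Z :=
  if Nat.eqb i k then y
  else (y * Gki P k i - qhat P x k i) / Gik P k i.

Fixpoint lcm_upto (M : nat -> Z) (L : nat) : Z :=
  match L with
  | O => 1
  | S n => Z.lcm (lcm_upto M n) (M n)
  end.

(* min / max of a (nonempty) list; the default 0 for [] is never used *)
Definition list_min (l : list Z) : Z :=
  match l with [] => 0 | a :: t => fold_left Z.min t a end.
Definition list_max (l : list Z) : Z :=
  match l with [] => 0 | a :: t => fold_left Z.max t a end.

Definition mingcd (M : nat -> Z) (L i : nat) : Z :=
  list_min (map (fun j => Z.gcd (M i) (M j))
                (filter (fun j => negb (Nat.eqb j i)) (seq 0 L))).

Definition maxmingcd (M : nat -> Z) (L : nat) : Z :=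
  list_max (map (mingcd M L) (seq 0 L)).

(* Main.v *)
Require Import Defs.
From Stdlib Require Import ZArith Reals List Lia Lra Psatz.
Import ListNotations.

Lemma fold_min_le : forall t a, (fold_left Z.min t a <= a)%Z /\
  forall x, In x t -> (fold_left Z.min t a <= x)%Z.
Proof.
  induction t as [|b t IH]; intros a; simpl.
  - split; [lia| tauto].
  - destruct (IH (Z.min a b)) as [H1 H2]. split; [lia|].
    intros x [->|Hx]; [lia| auto].
Qed.

Lemma list_min_le : forall l x, In x l -> (list_min l <= x)%Z.
Proof.
  intros [|a t] x Hx; simpl in *; [tauto|].
  destruct (fold_min_le t a) as [H1 H2]. destruct Hx as [->|Hx]; auto.
Qed.

Lemma mingcd_le (M : nat -> Z) L k i : (i < L)%nat -> i <> k ->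
  (mingcd M L k <= Z.gcd (M k) (M i))%Z.
Proof.
  intros Hi Hik. unfold mingcd. apply list_min_le.
  apply (in_map (fun j => Z.gcd (M k) (M j))).
  apply filter_In. split. apply in_seq; lia.
  destruct (Nat.eqb_spec i k); simpl; congruence.
Qed.

Lemma lcm_upto_div (M : nat -> Z) X : forall L,
  (forall j, (j < L)%nat -> (M j | X)%Z) -> (lcm_upto M L | X)%Z.
Proof.
  induction L as [|L IH]; intros H; simpl.
  - apply Z.divide_1_l.
  - apply Z.lcm_least; auto.
Qed.

Lemma round_q (m q a b : Z) (tau : R) : (0 < m)%Z ->
  (Rabs (IZR a) <= tau)%R -> (Rabs (IZR b) <= tau)%R -> (tau < IZR m / 4)%R ->
  round (IZR (m*q + a - b) / IZR m)%R = q.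
Proof.
  intros Hm Ha Hb Ht. unfold round.
  assert (Hm' : (0 < IZR m)%R) by (apply IZR_lt; lia).
  set (u := (IZR a - IZR b)%R).
  set (v := (u / IZR m)%R).
  assert (Huv : u = (v * IZR m)%R) by (unfold v; field; lra).
  assert (Hx : (IZR (m*q + a - b) / IZR m = IZR q + v)%R).
  { unfold v, u. rewrite minus_IZR, plus_IZR, mult_IZR. field. lra. }
  assert (Hu : (- (IZR m / 2) < u < IZR m / 2)%R).
  { unfold u. revert Ha Hb. unfold Rabs.
    destruct (Rcase_abs (IZR a)); destruct (Rcase_abs (IZR b)); intros; lra. }
  assert (Hv : (-(1/2) < v < 1/2)%R) by (rewrite Huv in Hu; split; nra).
  rewrite Hx.
  assert (Hup : (q + 1)%Z = up (IZR q + v + / 2)).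
  { apply tech_up; rewrite plus_IZR; simpl; lra. }
  rewrite <- Hup. lia.
Qed.

Lemma mod_div_diff a b B : (B | a - b)%Z -> (a mod B = b mod B)%Z.
Proof.
  intros [t Ht]. replace a with (b + t * B)%Z by lia.
  destruct (Z.eq_dec B 0) as [->|HB].
  - rewrite Z.mul_0_r, Z.add_0_r. reflexivity.
  - apply Z.mod_add; auto.
Qed.

Lemma mod_eq_div a b B : (a mod B = b mod B)%Z -> (B | a - b)%Z.
Proof.
  intros H. exists (a / B - b / B)%Z.
  rewrite (Z_div_mod_eq_full a B) at 1. rewrite (Z_div_mod_eq_full b B) at 1.
  rewrite H. ring.
Qed.

Lemma divfloor N m : (0 < m)%Z -> ((N - N mod m) / m = N / m)%Z.
Proof.
  intros Hm. rewrite Z.mod_eq by lia.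
  replace (N - (N - m * (N / m)))%Z with ((N / m) * m)%Z by ring.
  apply Z.div_mul; lia.
Qed.

Theorem corollary1 (L : nat) (M : nat -> Z) (N : Z) (rt : nat -> Z) (tau : R)
  (k : nat) (Gbar : nat -> Z) :
  (2 <= L)%nat ->
  (forall i, (i < L)%nat -> (0 < M i)%Z) ->
  (forall i j, (i < L)%nat -> (j < L)%nat -> i <> j -> M i <> M j) ->
  (0 <= N < lcm_upto M L)%Z ->
  (forall i, (i < L)%nat -> (0 <= rt i <= M i - 1)%Z) ->
  (forall i, (i < L)%nat -> (Rabs (IZR (rt i - N mod M i)) <= tau)%R) ->
  (tau < IZR (maxmingcd M L) / 4)%R ->
  (k < L)%nat ->
  mingcd M L k = maxmingcd M L ->
  is_inverse_family M L k Gbar ->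
  (exists y, is_nk_hat M rt L k Gbar y) /\
  (forall y, is_nk_hat M rt L k Gbar y ->
     forall i, (i < L)%nat -> nhat M rt k y i = ((N - N mod M i) / M i)%Z).
Proof.
  intros HL Hpos Hdist HN Hrt Herr Htau Hk Hkmax Hinv.
  set (nk := (N / M k)%Z).
  assert (HMk := Hpos k Hk).
  assert (Key : forall i, (i < L)%nat -> i <> k ->
    let g := mki M k i in let A := Gki M k i in let B := Gik M k i in
    let ni := (N / M i)%Z in
    (0 < g)%Z /\ (0 < B)%Z /\ M k = (g * A)%Z /\ M i = (g * B)%Z /\
    qhat M rt k i = (nk * A - ni * B)%Z).
  { intros i Hi Hik g A B ni.
    assert (HMi := Hpos i Hi).
    assert (Hg : (0 < g)%Z).
    { unfold g, mki. pose proof (Z.gcd_nonneg (M k) (M i)).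
      destruct (Z.eq_dec (Z.gcd (M k) (M i)) 0) as [H0|]; [|lia].
      apply Z.gcd_eq_0_l in H0. lia. }
    assert (HA : M k = (g * A)%Z).
    { apply Znumtheory.Zdivide_Zdiv_eq; auto. apply Z.gcd_divide_l. }
    assert (HB : M i = (g * B)%Z).
    { apply Znumtheory.Zdivide_Zdiv_eq; auto. apply Z.gcd_divide_r. }
    assert (HB0 : (0 < B)%Z) by nia.
    repeat split; auto.
    unfold qhat. fold g.
    assert (Hgt : (tau < IZR g / 4)%R).
    { rewrite <- Hkmax in Htau. pose proof (mingcd_le M L k i Hi Hik).
      apply IZR_le in H. unfold g, mki. lra. }
    pose proof (Z_div_mod_eq_full N (M i)) as Ei.
    pose proof (Z_div_mod_eq_full N (M k)) as Ek.
    replace (rt i - rt k)%Z with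
      (g * (nk * A - ni * B) + (rt i - N mod M i) - (rt k - N mod M k))%Z.
    2:{ fold ni in Ei. fold nk in Ek. assert (g * (nk * A - ni * B) = M k * nk - M i * ni)%Z by (rewrite HA, HB; ring). lia. }
    apply round_q with tau; auto. }
  assert (Hnk0 : (0 <= nk)%Z) by (apply Z.div_pos; lia).
  assert (Hsol : crt_sol M rt L k Gbar nk).
  { split; auto. intros i Hi Hik.
    destruct (Key i Hi Hik) as (Hg & HB0 & HA & HB & Hq).
    unfold xihat. rewrite Z.mod_mod by lia. apply mod_div_diff.
    pose proof (Hinv i Hi Hik) as Hv. apply mod_eq_div in Hv.
    destruct Hv as [t Ht]. rewrite Hq.
    exists (- nk * t + (N / M i) * Gbar i)%Z. nia. }
  assert (Hmin : forall y', crt_sol M rt L k Gbar y' -> (nk <= y')%Z).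
  { intros y' [Hy0 Hy]. destruct (Z_lt_le_dec y' nk) as [Hlt|]; [|lia].
    exfalso. set (d := (nk - y')%Z).
    assert (Hdiv : (lcm_upto M L | d * M k)%Z).
    { apply lcm_upto_div. intros j Hj.
      destruct (Nat.eq_dec j k) as [->|Hjk].
      - apply Z.divide_factor_r.
      - destruct (Key j Hj Hjk) as (Hg & HB0 & HA & HB & Hq).
        assert (Hd : (Gik M k j | d)%Z).
        { apply mod_eq_div. rewrite Hy by auto.
          destruct Hsol as [_ Hs]. rewrite Hs by auto. reflexivity. }
        destruct Hd as [s Hs]. rewrite HB, HA, Hs.
        exists (s * Gki M k j)%Z. ring. }
    apply Z.divide_pos_le in Hdiv; [|nia].
    pose proof (Z.mul_div_le N (M k) HMk). fold nk in H. nia. }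
  split.
  - exists nk. split; auto.
  - intros y [Hys Hyl] i Hi.
    assert (y = nk) by (specialize (Hyl nk Hsol); specialize (Hmin y Hys); lia).
    subst y. rewrite divfloor by auto. unfold nhat.
    destruct (Nat.eqb_spec i k) as [->|Hik]; [reflexivity|].
    destruct (Key i Hi Hik) as (Hg & HB0 & HA & HB & Hq).
    rewrite Hq. replace (nk * Gki M k i - (nk * Gki M k i - N / M i * Gik M k i))%Z
      with (N / M i * Gik M k i)%Z by ring.
    apply Z.div_mul; lia.
Qed.
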